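(* Let $F$ be a unitary $N=(2,2)$ full vertex operator superalgebra, let $p,q\in\mathbb R$, $a,b\in\mathbb R_{\ge0}$, and let $v\in F^{(p,q)}_{a+p/2,\,b+q/2}$ be nonzero. Then $$\frac{1}{a+1}\Big(2a+\frac c3\big((a+2)^2-\tfrac14\big)\Big)\ge p,\qquad \frac{1}{b+1}\Big(2b+\frac{\bar c}3\big((b+2)^2-\tfrac14\big)\Big)\ge q.$$ In particular, for any $a,b\in\mathbb R_{\ge0}$, $\sum_{p,q\in\mathbb R}\dim F^{(p,q)}_{a+p/2,\,b+q/2}<\infty$.
   Context: A unitary $N=(2,2)$ full VOA is a full vertex operator superalgebra $F=\bigoplus_{(h,\bar h)\in\mathbb R^2}F_{h,\bar h}$ (Moriwaki's axioms: real-analytic locality/associativity of $Y(a,\underline z)=\sum_{r,s}a(r,s)z^{-r-1}\bar z^{-s-1}$, vacuum $\mathbf 1$, $F_{0,0}=\mathbb C\mathbf 1$, $F_{h,\bar h}=0$ unless $h-\bar h\in\frac12\mathbb Z$, $\sum_{h+\bar h<K}\dim F_{h,\bar h}<\infty$ for all $K$, bounded below bigrading, conformal vectors $\omega\in F_{2,0},\bar\omega\in F_{0,2}$ giving commuting Virasoro actions $L(n),\bar L(n)$ of central charges $c,\bar c>0$ with $L(0),\bar L(0)$ the bigrading) with holomorphic $\tau^\pm\in F_{3/2,0}$, $J\in F_{1,0}$ and antiholomorphic $\bar\tau^\pm\in F_{0,3/2}$, $\bar J\in F_{0,1}$ whose modes $G^\pm_r,J_n$ ($Y(\tau^\pm,\underline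 z)=\sum_{r\in\frac12+\mathbb Z}G^\pm_rz^{-r-3/2}$, $Y(J,\underline z)=\sum J_nz^{-n-1}$) and $\bar G^\pm_r,\bar J_n$ satisfy two supercommuting copies of the $N=2$ Neveu–Schwarz relations ($[J_m,J_n]=\frac c3m\delta_{m+n,0}$, $[J_m,G^\pm_r]=\pm G^\pm_{m+r}$, $[L_m,G^\pm_r]=(\frac m2-r)G^\pm_{m+r}$, $[L_m,J_n]=-nJ_{m+n}$, $[G^\pm_r,G^\pm_s]_+=0$, $[G^+_r,G^-_s]_+=L_{r+s}+\frac12(r-s)J_{r+s}+\frac c6(r^2-\frac14)\delta_{r+s,0}$; barred with $\bar c$), $J_0,\bar J_0$ semisimple with real eigenvalues, $J_0-\bar J_0$ integral with $\exp(\pi i(J_0-\bar J_0))$ the parity operator; plus an invariant symmetric bilinear form ($(\mathbf 1,\mathbf 1)=1$, $(u,Y(a,\underline z)v)=(Y(e^{L(1)z+\bar L(1)\bar z}(-1)^{(L(0)-\bar L(0))+2(L(0)-\bar L(0))^2}z^{-2L(0)}\bar z^{-2\bar L(0)}a,\underline z^{-1})u,v)$) and an anti-linear involutive automorphism $\phi$ with $\phi(J)=-J,\phi(\tau^\pm)=\tau^\mp,\phi(\bar J)=-\bar J,\phi(\bar\tau^\pm)=-\bar\tau^\mp$ and $(\phi(\cdot),\cdot)$ positive definite. $F^{(p,q)}_{h,\bar h}=\{v\in F_{h,\bar h}:J_0v=pv,\bar J_0v=qv\}$. *)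

(* Defs.v *)
From HB Require Import structures.
From mathcomp Require Import all_boot all_order all_algebra.
From mathcomp Require Import complex.
From mathcomp Require Import reals.
Set Implicit Arguments. Unset Strict Implicit. Unset Printing Implicit Defensive.
Import Order.TTheory GRing.Theory Num.Theory.
Local Open Scope ring_scope.
Local Open Scope complex_scope.

Definition comm {K : nzRingType} {V : lmodType K} (A B : V -> V) (v : V) : V :=
  A (B v) - B (A v).
Definition acomm {K : nzRingType} {V : lmodType K} (A B : V -> V) (v : V) : V :=
  A (B v) + B (A v).
Definition is_linear_op {K : nzRingType} {V : lmodType K} (A : V -> V) : Prop :=
  forall (x : K) (u w : V), A (x *: u + w) = x *: A u + A w.

Definition dlt (R : realType) (m : int) : R := if m == 0 then 1 else 0.

(* Data of a unitary N=(2,2) superconformal structure on a complex vector space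
   V (the underlying space of the full VOA F, an algebraic direct sum of its
   bigraded pieces). *)
Record N22_unitary (R : realType) (V : lmodType R[i]) := {
  cc : R;  ccb : R;
  Lm : int -> V -> V;  Jm : int -> V -> V;  Gp : int -> V -> V;  Gm : int -> V -> V;
  Lb : int -> V -> V;  Jb : int -> V -> V;  Gpb : int -> V -> V; Gmb : int -> V -> V;
  form : V -> V -> R[i];   (* Hermitian form <u,v> = (phi u, v) *)
  vac : V;
  cc_gt0 : 0 < cc;  ccb_gt0 : 0 < ccb;
  ops_linear : forall n, is_linear_op (Lm n) /\ is_linear_op (Jm n) /\ is_linear_op (Gp n) /\
      is_linear_op (Gm n) /\ is_linear_op (Lb n) /\ is_linear_op (Jb n) /\
      is_linear_op (Gpb n) /\ is_linear_op (Gmb n);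
  (* holomorphic N=2 NS algebra, central charge cc *)
  vir : forall (m n : int) v, comm (Lm m) (Lm n) v =
      ((m - n)%:~R)%:C *: Lm (m + n) v
      + ((cc / 12%:R * ((m ^+ 3 - m)%:~R) * dlt R (m + n)))%:C *: v;
  JJ : forall (m n : int) v, comm (Jm m) (Jm n) v = ((cc / 3%:R) * m%:~R * dlt R (m + n))%:C *: v;
  JGp : forall (m k : int) v, comm (Jm m) (Gp k) v = Gp (m + k) v;
  JGm : forall (m k : int) v, comm (Jm m) (Gm k) v = - Gm (m + k) v;
  LGp : forall (m k : int) v, comm (Lm m) (Gp k) v = (m%:~R / 2%:R - (k%:~R + 2%:R^-1))%:C *: Gp (m + k) v;
  LGm : forall (m k : int) v, comm (Lm m) (Gm k) v = (m%:~R / 2%:R - (k%:~R + 2%:R^-1))%:C *: Gm (m + k) v;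
  LJ : forall (m n : int) v, comm (Lm m) (Jm n) v = (- n%:~R)%:C *: Jm (m + n) v;
  GpGp : forall (k l : int) v, acomm (Gp k) (Gp l) v = 0;
  GmGm : forall (k l : int) v, acomm (Gm k) (Gm l) v = 0;
  GpGm : forall (k l : int) v, acomm (Gp k) (Gm l) v =
      Lm (k + l + 1) v + (2%:R^-1 * (k - l)%:~R)%:C *: Jm (k + l + 1) v
      + ((cc / 6%:R) * ((k%:~R + 2%:R^-1) ^+ 2 - 4%:R^-1) * dlt R (k + l + 1))%:C *: v;
  (* antiholomorphic N=2 NS algebra, central charge ccb *)
  virb : forall (m n : int) v, comm (Lb m) (Lb n) v =
      ((m - n)%:~R)%:C *: Lb (m + n) v
      + ((ccb / 12%:R * ((m ^+ 3 - m)%:~R) * dlt R (m + n)))%:C *: v;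
  JJb : forall (m n : int) v, comm (Jb m) (Jb n) v = ((ccb / 3%:R) * m%:~R * dlt R (m + n))%:C *: v;
  JGpb : forall (m k : int) v, comm (Jb m) (Gpb k) v = Gpb (m + k) v;
  JGmb : forall (m k : int) v, comm (Jb m) (Gmb k) v = - Gmb (m + k) v;
  LGpb : forall (m k : int) v, comm (Lb m) (Gpb k) v = (m%:~R / 2%:R - (k%:~R + 2%:R^-1))%:C *: Gpb (m + k) v;
  LGmb : forall (m k : int) v, comm (Lb m) (Gmb k) v = (m%:~R / 2%:R - (k%:~R + 2%:R^-1))%:C *: Gmb (m + k) v;
  LJb : forall (m n : int) v, comm (Lb m) (Jb n) v = (- n%:~R)%:C *: Jb (m + n) v;
  GpGpb : forall (k l : int) v, acomm (Gpb k) (Gpb l) v = 0;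
  GmGmb : forall (k l : int) v, acomm (Gmb k) (Gmb l) v = 0;
  GpGmb : forall (k l : int) v, acomm (Gpb k) (Gmb l) v =
      Lb (k + l + 1) v + (2%:R^-1 * (k - l)%:~R)%:C *: Jb (k + l + 1) v
      + ((ccb / 6%:R) * ((k%:~R + 2%:R^-1) ^+ 2 - 4%:R^-1) * dlt R (k + l + 1))%:C *: v;
  hol_antihol_even : forall (m n : int) v,
      comm (Lm m) (Lb n) v = 0 /\ comm (Lm m) (Jb n) v = 0 /\ comm (Lm m) (Gpb n) v = 0 /\
      comm (Lm m) (Gmb n) v = 0 /\ comm (Jm m) (Lb n) v = 0 /\ comm (Jm m) (Jb n) v = 0 /\
      comm (Jm m) (Gpb n) v = 0 /\ comm (Jm m) (Gmb n) v = 0;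
  hol_antihol_odd : forall (m n : int) v,
      comm (Gp m) (Lb n) v = 0 /\ comm (Gp m) (Jb n) v = 0 /\ comm (Gm m) (Lb n) v = 0 /\
      comm (Gm m) (Jb n) v = 0 /\ acomm (Gp m) (Gpb n) v = 0 /\ acomm (Gp m) (Gmb n) v = 0 /\
      acomm (Gm m) (Gpb n) v = 0 /\ acomm (Gm m) (Gmb n) v = 0;
  form_linr : forall (x : R[i]) u w1 w2, form u (x *: w1 + w2) = x * form u w1 + form u w2;
  form_herm : forall u w, form u w = (form w u)^*;
  form_pos : forall v, v != 0 -> 0 < form v v;
  adj_L : forall n u w, form u (Lm n w) = form (Lm (- n) u) w;
  adj_J : forall n u w, form u (Jm n w) = form (Jm (- n) u) w;
  adj_Gp : forall k u w, form u (Gp k w) = form (Gm (- k - 1) u) w;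
  adj_Gm : forall k u w, form u (Gm k w) = form (Gp (- k - 1) u) w;
  adj_Lb : forall n u w, form u (Lb n w) = form (Lb (- n) u) w;
  adj_Jb : forall n u w, form u (Jb n w) = form (Jb (- n) u) w;
  adj_Gpb : forall k u w, form u (Gpb k w) = form (Gmb (- k - 1) u) w;
  adj_Gmb : forall k u w, form u (Gmb k w) = form (Gpb (- k - 1) u) w;
  decomp : forall v, exists s : seq (V * (R * R * R * R)),
      v = \sum_(x <- s) x.1 /\
      (forall x, x \in s -> [/\ Lm 0 x.1 = (x.2.1.1.1)%:C *: x.1, Lb 0 x.1 = (x.2.1.1.2)%:C *: x.1,
                               Jm 0 x.1 = (x.2.1.2)%:C *: x.1 & Jb 0 x.1 = (x.2.2)%:C *: x.1]);
  spin_cond : forall (h hb : R) v, v != 0 -> Lm 0 v = h%:C *: v -> Lb 0 v = hb%:C *: v ->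
      exists k : int, h - hb = k%:~R / 2%:R;
  charge_cond : forall (p q : R) v, v != 0 -> Jm 0 v = p%:C *: v -> Jb 0 v = q%:C *: v ->
      exists k : int, p - q = k%:~R;
  bounded_below : exists B : R, forall (h hb : R) v, v != 0 ->
      Lm 0 v = h%:C *: v -> Lb 0 v = hb%:C *: v -> B <= h /\ B <= hb;
  finite_graded : forall K : R, exists s : seq V, forall (h hb : R) v,
      Lm 0 v = h%:C *: v -> Lb 0 v = hb%:C *: v -> h + hb < K ->
      exists cs : seq R[i], v = \sum_(i < size s) cs`_i *: s`_i;
  vac_neq0 : vac != 0;
  vac_norm : form vac vac = 1;
  vac_space : forall v, Lm 0 v = 0 -> Lb 0 v = 0 -> exists x : R[i], v = x *: vac
}.

Definition Fpiece (R : realType) (V : lmodType R[i]) (F : N22_unitary V)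
    (h hb p q : R) (v : V) : Prop :=
  [/\ Lm F 0 v = h%:C *: v, Lb F 0 v = hb%:C *: v, Jm F 0 v = p%:C *: v & Jb F 0 v = q%:C *: v].

Definition fin_dim (R : realType) (V : lmodType R[i]) (P : V -> Prop) : Prop :=
  exists s : seq V, forall v, P v -> exists cs : seq R[i], v = \sum_(i < size s) cs`_i *: s`_i.

(* Main.v *)
Require Import Defs.
From HB Require Import structures.
From mathcomp Require Import all_boot all_order all_algebra.
From mathcomp Require Import complex.
From mathcomp Require Import reals.
From mathcomp Require Import ring lra zify.
From Stdlib Require Import Classical_Prop.
Import Order.TTheory GRing.Theory Num.Theory.
Local Open Scope ring_scope.
Local Open Scope complex_scope.

Lemma formDr {R : realType} {V : lmodType R[i]} (F : N22_unitary V) u w1 w2 :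
  Defs.form F u (w1 + w2) = Defs.form F u w1 + Defs.form F u w2.
Proof. have := form_linr F 1 u w1 w2. by rewrite scale1r mul1r. Qed.

Lemma form0r {R : realType} {V : lmodType R[i]} (F : N22_unitary V) u :
  Defs.form F u 0 = 0.
Proof.
have := formDr F u 0 0; rewrite addr0 => H.
by apply: (addrI (Defs.form F u 0)); rewrite addr0 -H.
Qed.

Lemma formZr {R : realType} {V : lmodType R[i]} (F : N22_unitary V) u x w :
  Defs.form F u (x *: w) = x * Defs.form F u w.
Proof. by rewrite -[x *: w]addr0 form_linr form0r addr0. Qed.

Lemma formDl {R : realType} {V : lmodType R[i]} (F : N22_unitary V) u1 u2 w :
  Defs.form F (u1 + u2) w = Defs.form F u1 w + Defs.form F u2 w.
Proof. by rewrite form_herm formDr rmorphD /= -!form_herm. Qed.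

Lemma formZl {R : realType} {V : lmodType R[i]} (F : N22_unitary V) u x w :
  Defs.form F (x *: u) w = conjc x * Defs.form F u w.
Proof. by rewrite form_herm formZr rmorphM /= -!form_herm. Qed.

Lemma form_ge0 {R : realType} {V : lmodType R[i]} (F : N22_unitary V) w :
  0 <= Defs.form F w w.
Proof.
have [->|/form_pos/ltW //] := eqVneq w 0.
by rewrite form0r.
Qed.

Lemma ge0_conjc (R : realType) (z : R[i]) : 0 <= z -> z^* = z.
Proof.
move=> /ger0_real /complex_realP [k ->]; exact: conjc_real.
Qed.

Lemma pos_of_form {R : realType} {V : lmodType R[i]} (F : N22_unitary V) v (t : R) :
  v != 0 -> 0 <= Defs.form F (t%:C *: v) v -> 0 <= t.
Proof.
move=> nz; rewrite formZl conjc_real pmulr_lge0; last exact: form_pos.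
by rewrite lecR.
Qed.

Lemma keyG {R : realType} {V : lmodType R[i]} (F : N22_unitary V) v (h p : R) (l : int) :
  v != 0 -> Lm F 0 v = h%:C *: v -> Jm F 0 v = p%:C *: v ->
  0 <= h + 2%:R^-1 * ((-l-1) - l)%:~R * p
        + cc F / 6%:R * (((-l-1)%:~R + 2%:R^-1)^+2 - 4%:R^-1).
Proof.
move=> nz hL hJ.
have e1 := adj_Gm F l (Gm F l v) v.
have e2 := adj_Gp F (-l-1) (Gp F (-l-1) v) v.
rewrite (_ : - (-l-1) - 1 = l) in e2; last by ring.
have s := GpGm F (-l-1) l v.
rewrite (_ : -l-1+l+1 = 0) in s; last by ring.
rewrite /dlt eqxx mulr1 hL hJ in s.
have := addr_ge0 (form_ge0 F (Gm F l v)) (form_ge0 F (Gp F (-l-1) v)).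
rewrite e1 e2 -formDl.
have -> : Gp F (- l - 1) (Gm F l v) + Gm F l (Gp F (- l - 1) v) = acomm (Gp F (-l-1)) (Gm F l) v by [].
rewrite s scalerA -!scalerDl -!rmorphM -!rmorphD.
exact: pos_of_form.
Qed.

Lemma keyG' {R : realType} {V : lmodType R[i]} (F : N22_unitary V) v (h p : R) (l : int) :
  v != 0 -> Lm F 0 v = h%:C *: v -> Jm F 0 v = p%:C *: v ->
  0 <= h + 2%:R^-1 * ((- l%:~R - 1) - l%:~R) * p
        + cc F / 6%:R * (((- l%:~R - 1) + 2%:R^-1)^+2 - 4%:R^-1).
Proof.
move=> nz hL hJ; have := @keyG _ _ F v h p l nz hL hJ.
by rewrite !(rmorphB, rmorphN, rmorph1).
Qed.

Lemma m1cast {R : realType} : ((-1 : int)%:~R : R) = -1.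
Proof. by rewrite rmorphN rmorph1. Qed.

Lemma formSumr {R : realType} {V : lmodType R[i]} (F : N22_unitary V) u n (f : 'I_n -> V) :
  Defs.form F u (\sum_(i < n) f i) = \sum_(i < n) Defs.form F u (f i).
Proof.
elim/big_rec2: _ => [|i y1 y2 _ <-]; first exact: form0r.
exact: formDr.
Qed.

Lemma orth_bound {R : realType} {V : lmodType R[i]} (F : N22_unitary V) (s : seq V) n (w : 'I_n -> V) :
  (forall i, w i != 0) -> (forall i j, i != j -> Defs.form F (w i) (w j) = 0) ->
  (forall i, exists cs : seq R[i], w i = \sum_(k < size s) cs`_k *: s`_k) -> (n <= size s)%N.
Proof.
move=> nz orth sp.
have exP : forall i, exists cs : seq R[i], w i == \sum_(k < size s) cs`_k *: s`_k.
  by move=> i; have [cs ->] := sp i; exists cs.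
pose cs i := xchoose (exP i).
have csP : forall i, w i = \sum_(k < size s) (cs i)`_k *: s`_k.
  by move=> i; apply/eqP; exact: (xchooseP (exP i)).
rewrite leqNgt; apply/negP => lt_m_n.
pose C : 'M[R[i]]_(n, size s) := \matrix_(i, k) (cs i)`_k.
have nfree : ~~ row_free C.
  rewrite -row_leq_rank -ltnNge; exact: (leq_ltn_trans (rank_leq_col C) lt_m_n).
rewrite -kermx_eq0 in nfree.
set K := kermx C in nfree.
case: (pickP (fun i => row i K != 0)) => [i0 Hi0 | H]; last first.
  move/negP: nfree; apply; apply/eqP/matrixP => i j.
  have := H i; move/negbFE/eqP => Hr.
  by have := congr1 (fun M : 'rV_(n) => M 0 j) Hr; rewrite !mxE.
set u := row i0 K in Hi0.
have uC : u *m C = 0 by apply/sub_kermxP; exact: row_sub.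
have S0 : \sum_(i < n) u 0 i *: w i = 0.
  under eq_bigr => i _ do rewrite csP scaler_sumr.
  rewrite exchange_big /=.
  apply: big1 => k _.
  under eq_bigr => i _ do rewrite scalerA.
  rewrite -scaler_suml.
  have E : \sum_i u 0 i * (cs i)`_k = (u *m C) 0 k.
    by rewrite [RHS]mxE; apply: eq_bigr => i _; rewrite [C i k]mxE.
  by rewrite E uC mxE scale0r.
have uj : forall j, u 0 j = 0.
  move=> j.
  have := congr1 (Defs.form F (w j)) S0.
  rewrite form0r formSumr (bigD1 j) //= big1; last first.
    by move=> i /negbTE; rewrite eq_sym => /negbT Hij; rewrite formZr orth // mulr0.
  rewrite addr0 formZr => /eqP; rewrite mulf_eq0 => /orP [/eqP //|].
  by move/eqP=> E; have := form_pos F (nz j); rewrite E ltxx.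
move/negP: Hi0; apply; apply/eqP/rowP => j; rewrite uj mxE //.
Qed.

Lemma keyGb {R : realType} {V : lmodType R[i]} (F : N22_unitary V) v (h p : R) (l : int) :
  v != 0 -> Lb F 0 v = h%:C *: v -> Jb F 0 v = p%:C *: v ->
  0 <= h + 2%:R^-1 * ((-l-1) - l)%:~R * p
        + ccb F / 6%:R * (((-l-1)%:~R + 2%:R^-1)^+2 - 4%:R^-1).
Proof.
move=> nz hL hJ.
have e1 := adj_Gmb F l (Gmb F l v) v.
have e2 := adj_Gpb F (-l-1) (Gpb F (-l-1) v) v.
rewrite (_ : - (-l-1) - 1 = l) in e2; last by ring.
have s := GpGmb F (-l-1) l v.
rewrite (_ : -l-1+l+1 = 0) in s; last by ring.
rewrite /dlt eqxx mulr1 hL hJ in s.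
have := addr_ge0 (form_ge0 F (Gmb F l v)) (form_ge0 F (Gpb F (-l-1) v)).
rewrite e1 e2 -formDl.
have -> : Gpb F (- l - 1) (Gmb F l v) + Gmb F l (Gpb F (- l - 1) v) = acomm (Gpb F (-l-1)) (Gmb F l) v by [].
rewrite s scalerA -!scalerDl -!rmorphM -!rmorphD.
exact: pos_of_form.
Qed.

Lemma keyGb' {R : realType} {V : lmodType R[i]} (F : N22_unitary V) v (h p : R) (l : int) :
  v != 0 -> Lb F 0 v = h%:C *: v -> Jb F 0 v = p%:C *: v ->
  0 <= h + 2%:R^-1 * ((- l%:~R - 1) - l%:~R) * p
        + ccb F / 6%:R * (((- l%:~R - 1) + 2%:R^-1)^+2 - 4%:R^-1).
Proof.
move=> nz hL hJ; have := @keyGb _ _ F v h p l nz hL hJ.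
by rewrite !(rmorphB, rmorphN, rmorph1).
Qed.

Lemma arith_up {R : realType} (a p c r : R) : 0 <= a -> 0 < c -> a < r -> 1 <= r -> r <= a + 1 ->
  0 <= (a + p / 2%:R) + 2%:R^-1 * ((-r-1) - r) * p + c / 6%:R * (((-r-1) + 2%:R^-1)^+2 - 4%:R^-1) ->
  p <= (a + 1)^-1 * (2%:R * a + c / 3%:R * ((a + 2%:R) ^+ 2 - 4%:R^-1)).
Proof.
move=> a0 c0 ar r1 ra H.
rewrite ler_pdivlMl; last lra.
have H' : r * p <= a + c / 6%:R * (r * r + r).
  move: H; set X := (X in 0 <= X); have -> : X = a - r * p + c / 6%:R * (r * r + r) by rewrite /X; field.
  lra.
have [p0|p0] := lerP p 0.
  nra.
have : (a + 1) * p <= 2%:R * (r * p) by nra.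
have rr : r * r + r <= (a+1) * (a + 2%:R) by nra.
have : c / 6%:R * (r * r + r) <= c / 6%:R * ((a+1) * (a + 2%:R)).
  apply: ler_wpM2l => //; apply: divr_ge0; [exact: ltW| by []].
nra.
Qed.

Lemma arith_lo {R : realType} (a p c : R) :
  0 <= (a + p / 2%:R) + 2%:R^-1 * ((- (-1) - 1) - (-1)) * p + c / 6%:R * (((-(-1)-1) + 2%:R^-1)^+2 - 4%:R^-1) ->
  - a <= p.
Proof.
move=> H.
have E : (a + p / 2%:R) + 2%:R^-1 * ((- (-1) - 1) - (-1)) * p + c / 6%:R * (((-(-1)-1) + 2%:R^-1)^+2 - 4%:R^-1) = a + p by field.
rewrite E in H; lra.
Qed.

Lemma floor_facts {R : realType} {a : R} : 0 <= a ->
  let r := ((Num.floor a + 1)%:~R : R) in [/\ a < r, 1 <= r & r <= a + 1].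
Proof.
move=> a0 r; have f1 := floorD1_gt a; have f2 := floor_le a.
have f3 : (0 : R) <= (Num.floor a)%:~R by rewrite ler0z floor_ge0.
have e : r = (Num.floor a)%:~R + 1 by rewrite /r rmorphD rmorph1.
split => //; rewrite e; lra.
Qed.

Lemma bound_hol {R : realType} {V : lmodType R[i]} (F : N22_unitary V) v (a p : R) :
  0 <= a -> v != 0 -> Lm F 0 v = (a + p / 2%:R)%:C *: v -> Jm F 0 v = p%:C *: v ->
  - a <= p /\ p <= (a + 1)^-1 * (2%:R * a + cc F / 3%:R * ((a + 2%:R) ^+ 2 - 4%:R^-1)).
Proof.
move=> a0 nz hL hJ; split.
  have := keyG' F v (a + p / 2%:R) p (-1) nz hL hJ; rewrite m1cast; exact: arith_lo.
have := keyG' F v (a + p / 2%:R) p (Num.floor a + 1) nz hL hJ.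
have [f1 f2 f3] := floor_facts a0 : [/\ a < ((Num.floor a + 1)%:~R : R), 1 <= ((Num.floor a + 1)%:~R : R) & ((Num.floor a + 1)%:~R : R) <= a + 1].
apply: arith_up => //; exact: cc_gt0.
Qed.

Lemma bound_antihol {R : realType} {V : lmodType R[i]} (F : N22_unitary V) v (a p : R) :
  0 <= a -> v != 0 -> Lb F 0 v = (a + p / 2%:R)%:C *: v -> Jb F 0 v = p%:C *: v ->
  - a <= p /\ p <= (a + 1)^-1 * (2%:R * a + ccb F / 3%:R * ((a + 2%:R) ^+ 2 - 4%:R^-1)).
Proof.
move=> a0 nz hL hJ; split.
  have := keyGb' F v (a + p / 2%:R) p (-1) nz hL hJ; rewrite m1cast; exact: arith_lo.
have := keyGb' F v (a + p / 2%:R) p (Num.floor a + 1) nz hL hJ.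
have [f1 f2 f3] := floor_facts a0 : [/\ a < ((Num.floor a + 1)%:~R : R), 1 <= ((Num.floor a + 1)%:~R : R) & ((Num.floor a + 1)%:~R : R) <= a + 1].
apply: arith_up => //; exact: ccb_gt0.
Qed.

Lemma orthJ {R : realType} {V : lmodType R[i]} (F : N22_unitary V) u w (p p' : R) :
  Jm F 0 u = p%:C *: u -> Jm F 0 w = p'%:C *: w -> p != p' -> Defs.form F u w = 0.
Proof.
move=> hu hw ne; have := adj_J F 0 u w.
rewrite oppr0 hu hw formZr formZl conjc_real => /eqP.
rewrite -subr_eq0 -mulrBl mulf_eq0 subr_eq0 => /orP [|/eqP //].
by rewrite (inj_eq (@complexI _)) eq_sym (negbTE ne).
Qed.

Lemma orthJb {R : realType} {V : lmodType R[i]} (F : N22_unitary V) u w (p p' : R) :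
  Jb F 0 u = p%:C *: u -> Jb F 0 w = p'%:C *: w -> p != p' -> Defs.form F u w = 0.
Proof.
move=> hu hw ne; have := adj_Jb F 0 u w.
rewrite oppr0 hu hw formZr formZl conjc_real => /eqP.
rewrite -subr_eq0 -mulrBl mulf_eq0 subr_eq0 => /orP [|/eqP //].
by rewrite (inj_eq (@complexI _)) eq_sym (negbTE ne).
Qed.

Lemma fin_collect {T : eqType} (P : T -> Prop) m :
  (forall l, uniq l -> (forall x, x \in l -> P x) -> (size l <= m)%N) ->
  exists S : seq T, forall x, P x -> x \in S.
Proof.
move=> bnd.
suff H : forall k l, uniq l -> (forall x, x \in l -> P x) -> (m - size l <= k)%N ->
   exists S : seq T, forall x, P x -> x \in S.
  by apply: (H m [::]) => //; rewrite subn0.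
elim=> [|k IH] l ul Pl hk;
  (case: (Classical_Prop.classic (exists x, P x /\ x \notin l)) => [[x [Px nx]] | Hn];
   last by exists l => x Px; case: (boolP (x \in l)) => // nx; exfalso; apply: Hn; exists x).
- have := bnd (x :: l); rewrite /= nx ul => /(_ isT).
  have : forall y, y \in x :: l -> P y by move=> y; rewrite inE => /orP [/eqP -> //|]; exact: Pl.
  move=> Hy /(_ Hy); lia.
- apply: (IH (x :: l)); rewrite /= ?nx ?ul //.
    by move=> y; rewrite inE => /orP [/eqP -> //|]; exact: Pl.
  lia.
Qed.

Definition Fpb {R : realType} {V : lmodType R[i]} (F : N22_unitary V) (h hb p q : R) (v : V) : bool :=
  [&& Lm F 0 v == h%:C *: v, Lb F 0 v == hb%:C *: v, Jm F 0 v == p%:C *: v & Jb F 0 v == q%:C *: v].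

Lemma FpbP {R : realType} {V : lmodType R[i]} (F : N22_unitary V) h hb p q v :
  Fpb F h hb p q v <-> Fpiece F h hb p q v.
Proof.
split; first by case/and4P => /eqP ? /eqP ? /eqP ? /eqP ?; split.
by case => *; apply/and4P; split; apply/eqP.
Qed.

Local Close Scope complex_scope.

Theorem lemma3p30 (R : realType) (V : lmodType R[i]) (F : N22_unitary V) :
  (forall (p q a b : R) (v : V), 0 <= a -> 0 <= b -> v != 0 ->
     Fpiece F (a + p / 2%:R) (b + q / 2%:R) p q v ->
     p <= (a + 1)^-1 * (2%:R * a + cc F / 3%:R * ((a + 2%:R) ^+ 2 - 4%:R^-1)) /\
     q <= (b + 1)^-1 * (2%:R * b + ccb F / 3%:R * ((b + 2%:R) ^+ 2 - 4%:R^-1)))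
  /\
  (forall (a b : R), 0 <= a -> 0 <= b ->
     (exists S : seq (R * R), forall (p q : R) (v : V), v != 0 ->
        Fpiece F (a + p / 2%:R) (b + q / 2%:R) p q v -> (p, q) \in S)
     /\ (forall p q : R, fin_dim (Fpiece F (a + p / 2%:R) (b + q / 2%:R) p q))).
Proof.
split.
  move=> p q a b v a0 b0 nz [hL hLb hJ hJb]; split.
    exact: (bound_hol F v a p a0 nz hL hJ).2.
  exact: (bound_antihol F v b q b0 nz hLb hJb).2.
move=> a b a0 b0; split; last first.
  move=> p q; have [s Hs] := finite_graded F (a + p / 2%:R + (b + q / 2%:R) + 1).
  exists s => v [hL hLb _ _]; apply: (Hs _ _ v hL hLb); lra.
set Bp := (a + 1)^-1 * (2%:R * a + cc F / 3%:R * ((a + 2%:R) ^+ 2 - 4%:R^-1)).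
set Bq := (b + 1)^-1 * (2%:R * b + ccb F / 3%:R * ((b + 2%:R) ^+ 2 - 4%:R^-1)).
have [s Hs] := finite_graded F (a + b + (Bp + Bq) / 2%:R + 1).
have [S HS] : exists S : seq (R * R), forall x : R * R,
   (exists v : V, v != 0 /\ Fpiece F (a + x.1 / 2%:R) (b + x.2 / 2%:R) x.1 x.2 v) -> x \in S.
  apply: (@fin_collect _ _ (size s)) => l ul Pl.
  have exP : forall i : 'I_(size l), exists v : V, (v != 0) &&
      Fpb F (a + (nth (0,0) l i).1 / 2%:R) (b + (nth (0,0) l i).2 / 2%:R) (nth (0,0) l i).1 (nth (0,0) l i).2 v.
    move=> i; have [v [nz hv]] := Pl _ (mem_nth (0,0) (ltn_ord i)).
    by exists v; rewrite nz /=; apply/FpbP.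
  pose w i := xchoose (exP i).
  have wP : forall i, w i != 0 /\
      Fpiece F (a + (nth (0,0) l i).1 / 2%:R) (b + (nth (0,0) l i).2 / 2%:R) (nth (0,0) l i).1 (nth (0,0) l i).2 (w i).
    by move=> i; have /andP [nz /FpbP hv] := xchooseP (exP i).
  apply: (@orth_bound _ _ F s (size l) w).
  - by move=> i; case: (wP i).
  - move=> i j nij.
    have [_ [_ _ hJi hJbi]] := wP i; have [_ [_ _ hJj hJbj]] := wP j.
    have ne : nth (0,0) l i != nth (0,0) l j.
      by rewrite nth_uniq // (inj_eq val_inj).
    move: ne hJi hJbi hJj hJbj.
    case: (nth (0,0) l i) => x1 x2; case: (nth (0,0) l j) => y1 y2 /= ne hJi hJbi hJj hJbj.
    have [e1|n1] := eqVneq x1 y1; last exact: (orthJ F _ _ _ _ hJi hJj n1).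
    have [e2|n2] := eqVneq x2 y2; last exact: (orthJb F _ _ _ _ hJbi hJbj n2).
    by rewrite e1 e2 eqxx in ne.
  - move=> i; have [nz [hL hLb hJ hJb]] := wP i.
    apply: (Hs _ _ (w i) hL hLb).
    have := (bound_hol F (w i) a _ a0 nz hL hJ); have := (bound_antihol F (w i) b _ b0 nz hLb hJb).
    rewrite -/Bp -/Bq; lra.
exists S => p q v nz hv; exact: (HS (p, q) (ex_intro _ v (conj nz hv))).
Qed.
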